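(* The 1-generated exact Kleene algebras are, up to isomorphism, exactly $\mathbf F_{\mathsf{KA}}(z)$, $\mathbf K_4$ and $\mathbf 2_{\mathsf{KA}}$, and each of them is projective in $\mathsf{KA}$.
   Context: $\mathsf{KA}$ is the variety of Kleene algebras: algebras $(A,\wedge,\vee,\neg,0,1)$ that are bounded distributive lattices with a unary operation $\neg$ satisfying $\neg\neg x\approx x$, $x\wedge y\approx\neg(\neg x\vee\neg y)$, and $x\wedge\neg x\le y\vee\neg y$. $\mathbf F_{\mathsf{KA}}(z)$ is the free Kleene algebra on one generator $z$; it has six elements $0<z\wedge\neg z< z,\neg z< z\vee\neg z<1$ with $z,\neg z$ incomparable. $\mathbf K_4$ is the four-element Kleene chain $0<\neg x<x<1$ (with $\neg 0=1$, $\neg 1=0$, $\neg x$ and $x$ swapped by $\neg$), and $\mathbf 2_{\mathsf{KA}}$ is the two-element Boolean algebra regarded as a Kleene algebra. An algebra is exact in $\mathsf{KA}$ if it is isomorphic to a finitely generated subalgebra of a finitely generated free Kleene algebra, and projective in $\mathsf{KA}$ iff it is a retract of a free Kleene algebra (there are homomorphisms $i:\mathbf P\to\mathbf F$, $j:\mathbf F\to\mathbf P$ with $j\circ i=\mathrm{id}_{\mathbf P}$). *)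

(* Defs.v *)
From mathcomp Require Import all_boot.
From Stdlib Require Import List.

Set Implicit Arguments.
Unset Strict Implicit.
Unset Printing Implicit Defensive.

Record KA := {
  ka_car :> Type;
  ka_meet : ka_car -> ka_car -> ka_car;
  ka_join : ka_car -> ka_car -> ka_car;
  ka_neg : ka_car -> ka_car;
  ka_zero : ka_car;
  ka_one : ka_car;
  ka_meetC : forall x y, ka_meet x y = ka_meet y x;
  ka_joinC : forall x y, ka_join x y = ka_join y x;
  ka_meetA : forall x y z, ka_meet x (ka_meet y z) = ka_meet (ka_meet x y) z;
  ka_joinA : forall x y z, ka_join x (ka_join y z) = ka_join (ka_join x y) z;
  ka_meet_absorb : forall x y, ka_meet x (ka_join x y) = x;
  ka_join_absorb : forall x y, ka_join x (ka_meet x y) = x;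
  ka_distr : forall x y z,
      ka_meet x (ka_join y z) = ka_join (ka_meet x y) (ka_meet x z);
  ka_join0 : forall x, ka_join x ka_zero = x;
  ka_meet1 : forall x, ka_meet x ka_one = x;
  ka_negK : forall x, ka_neg (ka_neg x) = x;
  ka_deMorgan : forall x y, ka_meet x y = ka_neg (ka_join (ka_neg x) (ka_neg y));
  (* x /\ ~x <= y \/ ~y, with a <= b meaning a /\ b = a *)
  ka_kleene : forall x y,
      ka_meet (ka_meet x (ka_neg x)) (ka_join y (ka_neg y)) = ka_meet x (ka_neg x)
}.

Definition ka_hom (A B : KA) (f : A -> B) : Prop :=
  (forall x y, f (ka_meet x y) = ka_meet (f x) (f y)) /\
  (forall x y, f (ka_join x y) = ka_join (f x) (f y)) /\
  (forall x, f (ka_neg x) = ka_neg (f x)) /\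
  f (ka_zero A) = ka_zero B /\
  f (ka_one A) = ka_one B.

Definition ka_iso (A B : KA) : Prop :=
  exists f : A -> B, ka_hom f /\ bijective f.

Definition ka_free_on (X : Type) (F : KA) (g : X -> F) : Prop :=
  forall (B : KA) (h : X -> B),
    exists f : F -> B, ka_hom f /\ (forall x, f (g x) = h x) /\
      (forall f' : F -> B, ka_hom f' -> (forall x, f' (g x) = h x) ->
         forall a, f' a = f a).

Inductive ka_gen (A : KA) (S : A -> Prop) : A -> Prop :=
  | kg_base x : S x -> ka_gen S x
  | kg_meet x y : ka_gen S x -> ka_gen S y -> ka_gen S (ka_meet x y)
  | kg_join x y : ka_gen S x -> ka_gen S y -> ka_gen S (ka_join x y)
  | kg_neg x : ka_gen S x -> ka_gen S (ka_neg x)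
  | kg_zero : ka_gen S (ka_zero A)
  | kg_one : ka_gen S (ka_one A).

Definition ka_fin_generated (A : KA) : Prop :=
  exists s : list A, forall a : A, ka_gen (fun x => In x s) a.

Definition ka_one_generated (A : KA) : Prop :=
  exists z : A, forall a : A, ka_gen (fun x => x = z) a.

(** Exact: isomorphic to a finitely generated subalgebra of a finitely
    generated free Kleene algebra; equivalently A is finitely generated and
    embeds (injective homomorphism) into some free KA on finitely many
    generators. *)
Definition ka_exact (A : KA) : Prop :=
  ka_fin_generated A /\
  exists (n : nat) (F : KA) (g : 'I_n -> F),
    ka_free_on g /\ exists e : A -> F, ka_hom e /\ injective e.

Definition ka_projective (P : KA) : Prop :=
  exists (X : Type) (F : KA) (g : X -> F),
    ka_free_on g /\
    exists (i : P -> F) (j : F -> P), ka_hom i /\ ka_hom j /\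
      (forall p, j (i p) = p).

Inductive K4_t := K4_0 | K4_nx | K4_x | K4_1.

Definition K4_rank (a : K4_t) : nat :=
  match a with K4_0 => 0 | K4_nx => 1 | K4_x => 2 | K4_1 => 3 end.
Definition K4_meet (a b : K4_t) := if K4_rank a <= K4_rank b then a else b.
Definition K4_join (a b : K4_t) := if K4_rank a <= K4_rank b then b else a.
Definition K4_neg (a : K4_t) :=
  match a with K4_0 => K4_1 | K4_nx => K4_x | K4_x => K4_nx | K4_1 => K4_0 end.

Definition K4 : KA.
Proof.
refine (@Build_KA K4_t K4_meet K4_join K4_neg K4_0 K4_1 _ _ _ _ _ _ _ _ _ _ _ _);
  intros; repeat match goal with x : K4_t |- _ => destruct x end; reflexivity.
Defined.

Definition Two_KA : KA.
Proof.
refine (@Build_KA bool andb orb negb false true _ _ _ _ _ _ _ _ _ _ _ _);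
  intros; repeat match goal with x : bool |- _ => destruct x end; reflexivity.
Defined.

(* Main.v *)
Require Import Defs.
From mathcomp Require Import all_boot.
From Stdlib Require Import List Classical.

Section Basic.
Variable A : KA.
Implicit Types x y u : A.
Local Notation "0" := (ka_zero A).
Local Notation "1" := (ka_one A).

Definition le x y := ka_meet x y = x.

Lemma meetI x : ka_meet x x = x.
Proof. by rewrite -{2}(ka_join_absorb x x) ka_meet_absorb. Qed.
Lemma joinI x : ka_join x x = x.
Proof. by rewrite -{2}(ka_meet_absorb x x) ka_join_absorb. Qed.
Lemma le_join x y : le x y -> ka_join x y = y.
Proof. by rewrite /le => <-; rewrite ka_joinC ka_meetC ka_join_absorb. Qed.
Lemma meet_l x y : le x y -> ka_meet x y = x. Proof. by []. Qed.
Lemma meet_r x y : le y x -> ka_meet x y = y. Proof. by rewrite ka_meetC. Qed.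
Lemma join_r x y : le x y -> ka_join x y = y. Proof. exact: le_join. Qed.
Lemma join_l x y : le y x -> ka_join x y = x. Proof. by rewrite ka_joinC; apply: le_join. Qed.
Lemma le_refl x : le x x. Proof. exact: meetI. Qed.
Lemma meet0l x : ka_meet 0 x = 0.
Proof. by rewrite -{1}(ka_join0 x) ka_joinC ka_meet_absorb. Qed.
Lemma meet0r x : ka_meet x 0 = 0. Proof. by rewrite ka_meetC meet0l. Qed.
Lemma meet1l x : ka_meet 1 x = x. Proof. by rewrite ka_meetC ka_meet1. Qed.
Lemma join0l x : ka_join 0 x = x. Proof. by rewrite ka_joinC ka_join0. Qed.
Lemma join1l x : ka_join 1 x = 1.
Proof. by rewrite -{1}(meet1l x) ka_join_absorb. Qed.
Lemma join1r x : ka_join x 1 = 1. Proof. by rewrite ka_joinC join1l. Qed.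
Lemma le0 x : le 0 x. Proof. exact: meet0l. Qed.
Lemma le1 x : le x 1. Proof. exact: ka_meet1. Qed.
Lemma neg_join x y : ka_neg (ka_join x y) = ka_meet (ka_neg x) (ka_neg y).
Proof. by rewrite ka_deMorgan !ka_negK. Qed.
Lemma neg_meet x y : ka_neg (ka_meet x y) = ka_join (ka_neg x) (ka_neg y).
Proof. by rewrite ka_deMorgan ka_negK. Qed.
Lemma le_neg {x y} : le x y -> le (ka_neg y) (ka_neg x).
Proof. move=> /le_join H; by rewrite /le ka_meetC -neg_join H. Qed.
Lemma neg1 : ka_neg 1 = 0.
Proof.
have := le_neg (le1 (ka_neg 0)); rewrite ka_negK /le meet0r => H; by rewrite -H.
Qed.
Lemma neg0 : ka_neg 0 = 1. Proof. by rewrite -neg1 ka_negK. Qed.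

Variable a : A.
Lemma le_m_a : le (ka_meet a (ka_neg a)) a.
Proof. by rewrite /le ka_meetC ka_meetA meetI. Qed.
Lemma le_m_na : le (ka_meet a (ka_neg a)) (ka_neg a).
Proof. by rewrite /le -ka_meetA meetI. Qed.
Lemma le_a_M : le a (ka_join a (ka_neg a)).
Proof. exact: ka_meet_absorb. Qed.
Lemma le_na_M : le (ka_neg a) (ka_join a (ka_neg a)).
Proof. by rewrite /le ka_joinC ka_meet_absorb. Qed.
Lemma le_m_M : le (ka_meet a (ka_neg a)) (ka_join a (ka_neg a)).
Proof. exact: ka_kleene. Qed.
Lemma negm : ka_neg (ka_meet a (ka_neg a)) = ka_join a (ka_neg a).
Proof. by rewrite neg_meet ka_negK ka_joinC. Qed.
Lemma negM : ka_neg (ka_join a (ka_neg a)) = ka_meet a (ka_neg a).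
Proof. by rewrite -negm ka_negK. Qed.
End Basic.
Arguments le {A}.

Global Hint Resolve le_refl le0 le1 le_m_a le_m_na le_a_M le_na_M le_m_M : kle.

Ltac solve_case :=
  solve [ reflexivity
        | symmetry; first [ apply: ka_meetC | apply: ka_joinC | apply: ka_negK
                          | apply: negm | apply: negM | apply: neg0 | apply: neg1
                          | apply: meet_l; solve [auto with kle]
                          | apply: meet_r; solve [auto with kle]
                          | apply: join_l; solve [auto with kle]
                          | apply: join_r; solve [auto with kle] ] ].

(* the six-element free algebra *)
Inductive F6_t := S0 | Sm | Sz | Snz | SM | S1.
Definition enc p := match p with S0 => (0,0) | Sm => (1,1) | Sz => (2,1)
  | Snz => (1,2) | SM => (2,2) | S1 => (3,3) end.
Definition dec (ij : nat * nat) := match ij with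
  | (0,_) => S0 | (1,1) => Sm | (2,1) => Sz | (1,2) => Snz | (2,2) => SM
  | (3,_) => S1 | _ => S0 end.
Definition F6_meet p q := dec (minn (enc p).1 (enc q).1, minn (enc p).2 (enc q).2).
Definition F6_join p q := dec (maxn (enc p).1 (enc q).1, maxn (enc p).2 (enc q).2).
Definition F6_neg p := match p with S0 => S1 | Sm => SM | Sz => Snz | Snz => Sz
  | SM => Sm | S1 => S0 end.
Definition F6 : KA.
Proof.
refine (@Build_KA F6_t F6_meet F6_join F6_neg S0 S1 _ _ _ _ _ _ _ _ _ _ _ _);
  intros; repeat match goal with x : F6_t |- _ => destruct x end; reflexivity.
Defined.

Definition eval {A : KA} (a : A) (p : F6) : A :=
  match p with S0 => ka_zero A | Sm => ka_meet a (ka_neg a) | Sz => a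
  | Snz => ka_neg a | SM => ka_join a (ka_neg a) | S1 => ka_one A end.

Lemma eval_hom (A : KA) (a : A) : ka_hom (eval a).
Proof.
split; [|split; [|split]]; [move=> p q|move=> p q|move=> p|split];
 try (destruct p); try (destruct q); simpl; solve_case.
Qed.

Lemma hom_comp (A B C : KA) (f : A -> B) (g : B -> C) :
  ka_hom f -> ka_hom g -> ka_hom (fun x => g (f x)).
Proof.
move=> [f1 [f2 [f3 [f4 f5]]]] [g1 [g2 [g3 [g4 g5]]]].
split; [|split; [|split; [|split]]]; intros; by rewrite ?f1 ?f2 ?f3 ?f4 ?f5 ?g1 ?g2 ?g3 ?g4 ?g5.
Qed.

Lemma hom_id (A : KA) : ka_hom (fun x : A => x).
Proof. by do 4 split. Qed.

Lemma hom_eval (A B : KA) (f : A -> B) (a : A) p :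
  ka_hom f -> f (eval a p) = eval (f a) p.
Proof.
move=> [f1 [f2 [f3 [f4 f5]]]]; case: p => /=; by rewrite ?f1 ?f2 ?f3 ?f4 ?f5.
Qed.

Lemma gen_eval (A : KA) (a x : A) : ka_gen (fun y => y = a) x -> exists p, x = eval a p.
Proof.
have [h1 [h2 [h3 [h4 h5]]]] := eval_hom _ a.
elim=> {x}.
- move=> x ->; by exists Sz.
- move=> x y _ [p ->] _ [q ->]; exists (ka_meet p q); by rewrite h1.
- move=> x y _ [p ->] _ [q ->]; exists (ka_join p q); by rewrite h2.
- move=> x _ [p ->]; exists (ka_neg p); by rewrite h3.
- by exists S0.
- by exists S1.
Qed.

Lemma eval_gen (A : KA) (a : A) p : ka_gen (fun y => y = a) (eval a p).
Proof.
have B : ka_gen (fun y => y = a) a by constructor.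
case: p => /=; [exact: kg_zero | exact: kg_meet B (kg_neg B) | exact: B | exact: kg_neg B | exact: kg_join B (kg_neg B) | exact: kg_one].
Qed.

Lemma gen_hom (A B : KA) (f : A -> B) (b x : A) :
  ka_hom f -> ka_gen (fun y => y = b) x -> ka_gen (fun y => y = f b) (f x).
Proof.
move=> [f1 [f2 [f3 [f4 f5]]]]; elim=> {x}.
- by move=> x ->; constructor.
- by move=> x y _ H1 _ H2; rewrite f1; constructor.
- by move=> x y _ H1 _ H2; rewrite f2; constructor.
- by move=> x _ H1; rewrite f3; constructor.
- by rewrite f4; constructor.
- by rewrite f5; constructor.
Qed.

Lemma inv_hom (A B : KA) (f : A -> B) (g : B -> A) :
  ka_hom f -> cancel f g -> cancel g f -> ka_hom g.
Proof.
move=> [f1 [f2 [f3 [f4 f5]]]] fK gK.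
have fi := can_inj fK.
split; [|split; [|split; [|split]]]; intros; apply: fi;
  by rewrite ?f1 ?f2 ?f3 ?f4 ?f5 ?gK.
Qed.

Lemma iso_of (A B : KA) (f : B -> A) : ka_hom f -> bijective f -> ka_iso A B.
Proof.
move=> hf [g fK gK]; exists g; split; first exact: inv_hom hf fK gK.
by exists f.
Qed.

Lemma iso_trans (A B C : KA) : ka_iso A B -> ka_iso B C -> ka_iso A C.
Proof.
move=> [f [hf bf]] [g [hg bg]]; exists (fun x => g (f x)); split.
  exact: hom_comp. exact: bij_comp.
Qed.

Lemma iso_sym (A B : KA) : ka_iso A B -> ka_iso B A.
Proof. move=> [f [hf bf]]; exact: iso_of hf bf. Qed.

Definition k4map {A : KA} (u : A) (k : K4) : A :=
  match k with K4_0 => ka_zero A | K4_nx => u | K4_x => ka_neg u | K4_1 => ka_one A end.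

Lemma le_trans (A : KA) (x y w : A) : le x y -> le y w -> le x w.
Proof. rewrite /le => H1 H2; by rewrite -H1 -{2}H2 ka_meetA H1. Qed.

Lemma k4map_hom (A : KA) (u : A) : le u (ka_neg u) -> ka_hom (k4map u).
Proof.
move=> H.
have H0 : le (ka_zero A) (ka_neg u) by apply: le0.
split; [|split; [|split]]; [move=> p q|move=> p q|move=> p|split];
 try (destruct p); try (destruct q); simpl; try solve_case;
 symmetry; first [apply: ka_negK | apply: ka_meetC | apply: ka_joinC ].
Qed.

Lemma k4map_inj (A : KA) (u : A) : le u (ka_neg u) -> u <> ka_zero A ->
  u <> ka_neg u -> injective (k4map u).
Proof.
move=> H H0 Hn.
have H01 : ka_zero A <> ka_one A.
  by move=> E; apply: H0; rewrite -(ka_meet1 u) -E meet0r.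
have Hu1 : u <> ka_one A.
  by move=> E; move: H; rewrite /le E neg1 meet0r.
have Hn0 : ka_neg u <> ka_zero A.
  by move=> E; move: H; rewrite /le E meet0r => /esym.
have Hn1 : ka_neg u <> ka_one A.
  by move=> E; apply: H0; rewrite -(ka_negK u) E neg1.
move=> p q; case: p; case: q => //= E; exfalso;
  first [ exact: H01 E | exact: H01 (esym E) | exact: Hu1 E | exact: Hu1 (esym E)
        | exact: Hn0 E | exact: Hn0 (esym E) | exact: Hn1 E | exact: Hn1 (esym E)
        | exact: H0 E | exact: H0 (esym E) | exact: Hn E | exact: Hn (esym E) ].
Qed.

Definition twomap (A : KA) (b : Two_KA) : A := if b then ka_one A else ka_zero A.

Lemma twomap_hom (A : KA) : ka_hom (twomap A).
Proof.
split; [|split; [|split]]; [move=> p q|move=> p q|move=> p|split];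
 try (destruct p); try (destruct q); simpl; solve_case.
Qed.

Lemma twomap_inj (A : KA) : ka_zero A <> ka_one A -> injective (twomap A).
Proof. move=> H [] [] //= E; exfalso; first [exact: H (esym E) | exact: H E]. Qed.

Section PSum.
Variable B : KA.
Inductive P_t := PBot | PMid of B | PTop.
Definition P_meet (x y : P_t) := match x, y with
  | PBot, _ => PBot | _, PBot => PBot | PTop, y => y | x, PTop => x
  | PMid a, PMid b => PMid (ka_meet a b) end.
Definition P_join (x y : P_t) := match x, y with
  | PTop, _ => PTop | _, PTop => PTop | PBot, y => y | x, PBot => x
  | PMid a, PMid b => PMid (ka_join a b) end.
Definition P_neg (x : P_t) := match x with
  | PBot => PTop | PTop => PBot | PMid a => PMid (ka_neg a) end.
Ltac pfin := first [ apply: ka_meetC | apply: ka_joinC | apply: ka_meetA | apply: ka_joinA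
        | apply: ka_meet_absorb | apply: ka_join_absorb | apply: ka_distr
        | apply: ka_deMorgan | apply: ka_kleene | apply: meetI | apply: joinI ].
Definition PK : KA.
Proof.
refine (@Build_KA P_t P_meet P_join P_neg PBot PTop _ _ _ _ _ _ _ _ _ _ _ _).
all: intros; repeat match goal with x : P_t |- _ => destruct x end; simpl.
all: rewrite ?ka_negK; try reflexivity.
all: f_equal; first [ pfin | symmetry; pfin | symmetry; rewrite ka_joinC; pfin ].
Defined.
End PSum.
Arguments PMid {B}. Arguments PBot {B}. Arguments PTop {B}.

Definition pim {B : KA} (p : PK B) : B :=
  match p with PBot => ka_zero B | PTop => ka_one B | PMid b => b end.

Lemma pim_hom (B : KA) : ka_hom (@pim B).
Proof.
split; [|split; [|split]]; [move=> p q|move=> p q|move=> p|split];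
 try (destruct p); try (destruct q); simpl; solve_case.
Qed.

Section Free.
Variables (X : Type) (Fn : KA) (g : X -> Fn).
Hypothesis Hfree : ka_free_on g.

Lemma free_unique (B : KA) (f1 f2 : Fn -> B) : ka_hom f1 -> ka_hom f2 ->
  (forall x, f1 (g x) = f2 (g x)) -> forall a, f1 a = f2 a.
Proof.
move=> h1 h2 E a.
have [f [_ [_ U]]] := Hfree (B) (fun x => f1 (g x)).
by rewrite (U f1 h1 (fun x => erefl)) (U f2 h2 (fun x => esym (E x))).
Qed.

Lemma free_two : exists t : Fn -> Two_KA, ka_hom t.
Proof. have [f [hf _]] := Hfree Two_KA (fun _ => true); by exists f. Qed.

Lemma free_01 : ka_zero Fn <> ka_one Fn.
Proof.
have [t [_ [_ [_ [t4 t5]]]]] := free_two.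
by move=> E; move: t5; rewrite -E t4.
Qed.

Lemma free_nfix (x : Fn) : x <> ka_neg x.
Proof.
have [t [_ [_ [t3 _]]]] := free_two.
move=> E; have := t3 x; rewrite -E; by case: (t x).
Qed.

Lemma free_bool (x : Fn) : ka_meet x (ka_neg x) = ka_zero Fn ->
  x = ka_zero Fn \/ x = ka_one Fn.
Proof.
move=> H.
have [psi [hpsi [Hg _]]] := Hfree (PK Fn) (fun i => PMid (g i)).
have E : forall a, pim (psi a) = a.
  move=> a; refine (@free_unique Fn (fun a => pim (psi a)) (fun a => a) (hom_comp _ _ _ _ _ hpsi (pim_hom Fn)) (hom_id Fn) _ a) => i.
  by rewrite /= Hg.
have [p1 [_ [p3 [p4 _]]]] := hpsi.
have := f_equal psi H; rewrite p1 p3 p4 => H'.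
case Ep: (psi x) H' => [|b|] //= _.
- by left; rewrite -(E x) Ep.
- by right; rewrite -(E x) Ep.
Qed.
End Free.

Lemma eval_inj_crit (A : KA) (a : A) :
  ka_meet a (ka_neg a) <> ka_zero A -> ka_meet a (ka_neg a) <> a ->
  ka_meet (ka_neg a) a <> ka_neg a -> injective (eval a).
Proof.
move=> Hm H1 H2.
have Fa0 : a <> ka_zero A by move=> E; apply: Hm; rewrite E meet0l.
have Fna0 : ka_neg a <> ka_zero A by move=> E; apply: Hm; rewrite E meet0r.
have Fa1 : a <> ka_one A by move=> E; apply: H2; rewrite {2}E ka_meet1.
have Fna1 : ka_neg a <> ka_one A by move=> E; apply: H1; rewrite E ka_meet1.
have F01 : ka_zero A <> ka_one A
  by move=> E; apply: Hm; rewrite -(ka_meet1 (ka_meet _ _)) -E meet0r.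
have Fma : ka_meet a (ka_neg a) <> a by [].
have Fmna : ka_meet a (ka_neg a) <> ka_neg a by move=> E; apply: H2; rewrite ka_meetC.
have FmM : ka_meet a (ka_neg a) <> ka_join a (ka_neg a).
  move=> E; apply: H1.
  have := le_a_M _ a; rewrite -E /le ka_meetA meetI => E2; by rewrite E2.
have Fm1 : ka_meet a (ka_neg a) <> ka_one A.
  move=> E; apply: Hm; have := le_m_M _ a; rewrite /le -negm E neg1 meet0r => E2.
  by rewrite E2.
have Faa : a <> ka_neg a by move=> E; apply: H1; rewrite -E meetI.
have FaM : a <> ka_join a (ka_neg a).
  by move=> E; apply: H2; rewrite {2}E; apply: le_na_M.
have FnaM : ka_neg a <> ka_join a (ka_neg a).
  by move=> E; apply: H1; rewrite E; apply: le_a_M.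
have FM0 : ka_join a (ka_neg a) <> ka_zero A.
  by move=> E; apply: Hm; have := le_m_M _ a; rewrite /le E meet0r.
have FM1 : ka_join a (ka_neg a) <> ka_one A.
  by move=> E; apply: Hm; rewrite -negM E neg1.
move=> p q; case: p; case: q => //= E; exfalso;
  first [ exact: Fa0 E | exact: Fa0 (esym E) | exact: Fna0 E | exact: Fna0 (esym E)
        | exact: Fa1 E | exact: Fa1 (esym E) | exact: Fna1 E | exact: Fna1 (esym E)
        | exact: F01 E | exact: F01 (esym E) | exact: Hm E | exact: Hm (esym E)
        | exact: Fma E | exact: Fma (esym E) | exact: Fmna E | exact: Fmna (esym E)
        | exact: FmM E | exact: FmM (esym E) | exact: Fm1 E | exact: Fm1 (esym E)
        | exact: Faa E | exact: Faa (esym E) | exact: FaM E | exact: FaM (esym E)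
        | exact: FnaM E | exact: FnaM (esym E) | exact: FM0 E | exact: FM0 (esym E)
        | exact: FM1 E | exact: FM1 (esym E) ].
Qed.

From Stdlib Require Import ClassicalEpsilon.

Lemma bij_of (A B : Type) (f : A -> B) : injective f ->
  (forall y, exists x, y = f x) -> bijective f.
Proof.
move=> fi fs.
pose g y := proj1_sig (constructive_indefinite_description _ (fs y)).
have gK : cancel g f.
  move=> y; rewrite /g; case: constructive_indefinite_description => x /= E.
  by rewrite -E.
exists g => // x; apply: fi; by rewrite gK.
Qed.

Lemma transfer (A B F : KA) (z : F) :
  ka_free_on (fun _ : 'I_1 => z) -> ka_iso A B -> ka_one_generated B ->
  (exists e : B -> F, ka_hom e /\ injective e) ->
  ka_one_generated A /\ ka_exact A.
Proof.
move=> Hf [f [hf [g fK gK]]] [b Hb] [e [he ie]].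
have hg := inv_hom _ _ _ _ hf fK gK.
have Ha : forall x, ka_gen (fun y => y = g b) x.
  by move=> x; rewrite -(fK x); apply: gen_hom.
split; first by exists (g b).
split; first by exists [:: g b] => x; elim: (Ha x); (try by constructor); move=> x0 ->; constructor; left.
exists 1, F, (fun _ => z); split => //.
exists (fun x => e (f x)); split; first exact: hom_comp.
exact: inj_comp ie (can_inj fK).
Qed.

Section FF.
Variables (F : KA) (z : F).
Hypothesis Hz : ka_free_on (fun _ : unit => z).

Lemma F_psi : exists psi : F -> F6, ka_hom psi /\ psi z = Sz.
Proof. have [f [hf [E _]]] := Hz F6 (fun _ => Sz); exists f; split => //; exact: E tt. Qed.

Lemma F_surj (x : F) : exists p, x = eval z p.
Proof.
have [psi [hpsi E]] := F_psi.
exists (psi x).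
have := @free_unique unit F (fun _ => z) Hz F (fun a => a) (fun a => eval z (psi a))
  (hom_id F) (hom_comp _ _ _ _ _ hpsi (eval_hom _ z)).
move=> U; apply: U => _ /=; by rewrite E.
Qed.

Lemma F_inj : injective (eval z).
Proof.
have [psi [hpsi E]] := F_psi.
move=> p q Epq.
have := f_equal psi Epq; rewrite !(hom_eval _ _ _ _ _ hpsi) E.
clear Epq; by case: p; case: q.
Qed.

Lemma F_gen (x : F) : ka_gen (fun y => y = z) x.
Proof. have [p ->] := F_surj x; exact: eval_gen. Qed.

Lemma F_free1 : ka_free_on (fun _ : 'I_1 => z).
Proof.
move=> B h; have [f [hf [E U]]] := Hz B (fun _ => h ord0).
exists f; split => //; split.
  by move=> i; rewrite (ord1 i); exact: E tt.
by move=> f' hf' E'; apply: U => // _; exact: E'.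
Qed.

Definition mz := ka_meet z (ka_neg z).

Lemma mz_le : le mz (ka_neg mz).
Proof. rewrite /mz negm; exact: le_m_M. Qed.

Lemma mz_0 : mz <> ka_zero F.
Proof. move=> E; have := @F_inj Sm S0 E; by []. Qed.

Lemma mz_inj : injective (k4map mz).
Proof.
apply: k4map_inj; [exact: mz_le | exact: mz_0 | ].
exact: (@free_nfix unit F (fun _ => z) Hz mz).
Qed.
End FF.

Theorem proposition5p5 (F : KA) (z : F) :
  ka_free_on (fun _ : unit => z) ->
  (forall A : KA,
     (ka_one_generated A /\ ka_exact A) <->
     (ka_iso A F \/ ka_iso A K4 \/ ka_iso A Two_KA)) /\
  ka_projective F /\ ka_projective K4 /\ ka_projective Two_KA.
Proof.
move=> Hz.
have Hz1 := @F_free1 F z Hz.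
have [j4 [hj4 [Ej4 _]]] := Hz K4 (fun _ => K4_x).
have [j2 [hj2 [Ej2 _]]] := Hz Two_KA (fun _ => true).
have Ej4' : j4 z = K4_x := Ej4 tt.
have Ej2' : j2 z = true := Ej2 tt.
have hi4 := k4map_hom _ _ (mz_le F z).
have ii4 := @mz_inj F z Hz.
have F01 := @free_01 unit F (fun _ => z) Hz.
split; last first.
  split; [|split].
  - exists unit, F, (fun _ => z); split => //.
    by exists id, id; split; [exact: hom_id | split; [exact: hom_id |]].
  - exists unit, F, (fun _ => z); split => //.
    exists (k4map (mz F z)), j4; split => //; split => //.
    have [a1 [a2 [a3 [a4 a5]]]] := hj4.
    by case => /=; rewrite /mz ?a3 ?a1 ?a3 ?a4 ?a5 ?Ej4'.
  - exists unit, F, (fun _ => z); split => //.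
    exists (twomap F), j2; split; first exact: (twomap_hom F). split => //.
    have [a1 [a2 [a3 [a4 a5]]]] := hj2.
    by case => /=; rewrite ?a4 ?a5.
move=> A; split.
- case=> [[a Ha] [_ [n [Fn [g [Hfree [e [he ie]]]]]]]].
  have six : forall x, exists p, x = eval a p by move=> x; exact: gen_eval (Ha x).
  have [e1 [e2 [e3 [e4 e5]]]] := he.
  have Fn01 := @free_01 _ _ _ Hfree.
  have A01 : ka_zero A <> ka_one A by move=> E; apply: Fn01; rewrite -e4 -e5 E.
  have Anfix : forall x : A, x <> ka_neg x.
    by move=> x E; apply: (@free_nfix _ _ _ Hfree (e x)); rewrite -e3 -E.
  case: (classic (ka_meet a (ka_neg a) = ka_zero A)) => Hm.
  + have Hb : e a = ka_zero Fn \/ e a = ka_one Fn.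
      apply: (@free_bool _ _ _ Hfree (e a)); by rewrite -e3 -e1 Hm e4.
    have [b Eb] : exists b, a = twomap A b.
      by case: Hb => E; [exists false | exists true]; apply: ie; rewrite E /= ?e4 ?e5.
    right; right. apply: (iso_of _ _ (twomap A)); first exact: twomap_hom.
    apply: bij_of; first exact: twomap_inj.
    move=> y; have [p ->] := six y; exists (eval b p).
    by rewrite (hom_eval _ _ _ _ _ (twomap_hom A)) -Eb.
  + case: (classic (ka_meet a (ka_neg a) = a)) => H1.
    * right; left. have hk := k4map_hom _ _ H1.
      apply: (iso_of _ _ (k4map a)) => //.
      apply: bij_of.
        apply: k4map_inj => //; by move=> E; apply: Hm; rewrite E meet0l.
      move=> y; have [p ->] := six y; exists (eval (K4_nx : K4) p).
      by rewrite (hom_eval _ _ _ _ _ hk).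
    * case: (classic (ka_meet (ka_neg a) a = ka_neg a)) => H2.
      -- right; left.
         have Hl : le (ka_neg a) (ka_neg (ka_neg a)) by rewrite /le ka_negK.
         have hk := k4map_hom _ _ Hl.
         apply: (iso_of _ _ (k4map (ka_neg a))) => //.
         apply: bij_of.
           apply: k4map_inj => //; by move=> E; apply: Hm; rewrite E meet0r.
         move=> y; have [p ->] := six y; exists (eval (K4_x : K4) p).
         by rewrite (hom_eval _ _ _ _ _ hk) /= ka_negK.
      -- left; apply: (iso_trans _ F6 _).
           apply: (iso_of _ _ (eval a)); first exact: eval_hom.
           by apply: bij_of; [exact: eval_inj_crit | exact: six].
         apply: iso_sym; apply: (iso_of _ _ (eval z)); first exact: eval_hom.
         apply: bij_of; [exact: (@F_inj F z Hz) | exact: (@F_surj F z Hz)].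
- case=> [I|[I|I]].
  + apply: (transfer _ _ _ _ Hz1 I); first by exists z; exact: (@F_gen F z Hz).
    exists id; split; [exact: hom_id | by move=> x y].
  + apply: (transfer _ _ _ _ Hz1 I).
      exists K4_x => k.
      have B : ka_gen (fun y : K4 => y = K4_x) (K4_x : K4) by constructor.
      case: k; [exact: (@kg_zero K4) | exact: (@kg_neg K4 _ K4_x B) | exact: B
               | exact: (@kg_one K4)].
    by exists (k4map (mz F z)).
  + apply: (transfer _ _ _ _ Hz1 I).
      exists true => k.
      have B : ka_gen (fun y : Two_KA => y = true) (true : Two_KA) by constructor.
      case: k; [exact: B | exact: (@kg_neg Two_KA _ true B)].
    exists (twomap F); split; [exact: twomap_hom | exact: twomap_inj].
Qed.
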